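(* Let $k\ge 1$ be an integer and let $\Gamma=\mathbb{Z}_2\,\mathrm{wr}\,\mathbb{Z}^k$ be the restricted wreath product. Then $\Gamma$ has the property $R_\infty$: for every automorphism $\phi:\Gamma\to\Gamma$ the Reidemeister number $R(\phi)$ is infinite.
   Context: For an automorphism $\phi$ of a group $G$, the Reidemeister (twisted conjugacy) classes are the equivalence classes of the relation $g\sim hg\phi(h^{-1})$, $h,g\in G$; $R(\phi)$ denotes the number of these classes. A group has property $R_\infty$ if $R(\phi)=\infty$ for every automorphism $\phi$. The restricted wreath product $\mathbb{Z}_p\,\mathrm{wr}\,\mathbb{Z}^k$ is the semidirect product $\left(\bigoplus_{x\in\mathbb{Z}^k}(\mathbb{Z}_p)_{(x)}\right)\rtimes_\alpha\mathbb{Z}^k$, where each $(\mathbb{Z}_p)_{(x)}\cong\mathbb{Z}_p$ is generated by an element $\delta_x$, the direct sum consists of finitely supported elements, and $\alpha(y)(\delta_x)=\delta_{y+x}$ for $y\in\mathbb{Z}^k$. *)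

(* Defs.v *)
From HB Require Import structures.
From mathcomp Require Import all_boot all_order all_algebra.
From mathcomp Require Import finmap.
Set Implicit Arguments. Unset Strict Implicit. Unset Printing Implicit Defensive.
Import GRing.Theory.
Local Open Scope ring_scope.
Local Open Scope fset_scope.

Definition Zk (k : nat) := 'rV[int]_k.

(* The direct sum  (+)_{x in Z^k} Z_2  is identified with the group of finite
   subsets of Z^k under symmetric difference: an element sum_{x in A} delta_x
   (each coefficient in Z_2 = {0,1}) corresponds to its support A. *)
Definition base (k : nat) := {fset Zk k}.

Definition symdiff (k : nat) (A B : base k) : base k := (A `\` B) `|` (B `\` A).

Definition shift (k : nat) (y : Zk k) (A : base k) : base k := [fset (y + x)%R | x in A].

Definition wr2 (k : nat) := (base k * Zk k)%type.

Definition wr_mul (k : nat) (g h : wr2 k) : wr2 k :=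
  (symdiff g.1 (shift g.2 h.1), (g.2 + h.2)%R).
Definition wr_one (k : nat) : wr2 k := (fset0, 0%R).
Definition wr_inv (k : nat) (g : wr2 k) : wr2 k := (shift (- g.2)%R g.1, (- g.2)%R).

Definition wr_automorphism (k : nat) (phi : wr2 k -> wr2 k) : Prop :=
  bijective phi /\ forall g h, phi (wr_mul g h) = wr_mul (phi g) (phi h).

Definition reidemeister_rel (k : nat) (phi : wr2 k -> wr2 k) (g g' : wr2 k) : Prop :=
  exists h, g' = wr_mul (wr_mul h g) (phi (wr_inv h)).

Definition reidemeister_finite (k : nat) (phi : wr2 k -> wr2 k) : Prop :=
  exists s : seq (wr2 k), forall g, exists2 x, x \in s & reidemeister_rel phi x g.

Definition reidemeister_infinite (k : nat) (phi : wr2 k -> wr2 k) : Prop :=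
  ~ reidemeister_finite phi.

(* Main.v *)
Require Import Defs.
From HB Require Import structures.
From mathcomp Require Import all_boot all_order all_algebra.
From mathcomp Require Import finmap zify.
From Stdlib Require Import ClassicalEpsilon.
Set Implicit Arguments. Unset Strict Implicit. Unset Printing Implicit Defensive.
Import Order.TTheory GRing.Theory Num.Theory.
Local Open Scope fset_scope.
Local Open Scope ring_scope.


Lemma in_symdiff k (A B : base k) x : (x \in symdiff A B) = (x \in A) (+) (x \in B).
Proof. rewrite /symdiff !inE; by case: (x \in A); case: (x \in B). Qed.

Lemma in_shift k (y : Zk k) (A : base k) x : (x \in shift y A) = (x - y \in A).
Proof.
apply/imfsetP/idP => [[a aA ->]|xA]; first by rewrite addrC addKr.
by exists (x - y) => //; rewrite addrC subrK.
Qed.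

Lemma symdiffA k (A B C : base k) : symdiff A (symdiff B C) = symdiff (symdiff A B) C.
Proof. by apply/fsetP => x; rewrite !in_symdiff addbA. Qed.
Lemma symdiffC k (A B : base k) : symdiff A B = symdiff B A.
Proof. by apply/fsetP => x; rewrite !in_symdiff addbC. Qed.
Lemma symdiff0 k (A : base k) : symdiff A fset0 = A.
Proof. by apply/fsetP => x; rewrite !in_symdiff inE addbF. Qed.
Lemma sym0diff k (A : base k) : symdiff fset0 A = A.
Proof. by apply/fsetP => x; rewrite !in_symdiff inE. Qed.
Lemma symdiffvv k (A : base k) : symdiff A A = fset0.
Proof. by apply/fsetP => x; rewrite !in_symdiff inE addbb. Qed.
Lemma shift0 k (A : base k) : shift 0 A = A.
Proof. by apply/fsetP => x; rewrite in_shift subr0. Qed.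
Lemma shift_set0 k (y : Zk k) : shift y fset0 = fset0.
Proof. by apply/fsetP => x; rewrite in_shift !inE. Qed.
Lemma shiftD k (y y' : Zk k) A : shift y (shift y' A) = shift (y + y') A.
Proof. by apply/fsetP => x; rewrite !in_shift opprD addrA. Qed.
Lemma shift_symdiff k (y : Zk k) A B : shift y (symdiff A B) = symdiff (shift y A) (shift y B).
Proof. by apply/fsetP => x; rewrite !(in_shift, in_symdiff). Qed.

Lemma wr_mulA k (g h l : wr2 k) : wr_mul g (wr_mul h l) = wr_mul (wr_mul g h) l.
Proof.
case: g h l => [A a] [B b] [C c]; rewrite /wr_mul /=.
by rewrite shift_symdiff shiftD symdiffA addrA.
Qed.
Lemma wr_mul1g k (g : wr2 k) : wr_mul (wr_one k) g = g.
Proof. by case: g => A a; rewrite /wr_mul /= shift0 sym0diff add0r. Qed.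
Lemma wr_mulg1 k (g : wr2 k) : wr_mul g (wr_one k) = g.
Proof. by case: g => A a; rewrite /wr_mul /= shift_set0 symdiff0 addr0. Qed.
Lemma wr_mulVg k (g : wr2 k) : wr_mul (wr_inv g) g = wr_one k.
Proof. by case: g => A a; rewrite /wr_mul /wr_inv /= symdiffvv addNr. Qed.
Lemma wr_mulgV k (g : wr2 k) : wr_mul g (wr_inv g) = wr_one k.
Proof. by case: g => A a; rewrite /wr_mul /wr_inv /= shiftD subrr shift0 symdiffvv; congr (_, _); rewrite subrr. Qed.

Definition ishom k (phi : wr2 k -> wr2 k) :=
  forall g h, phi (wr_mul g h) = wr_mul (phi g) (phi h).

Lemma wr_idem k (g : wr2 k) : wr_mul g g = g -> g = wr_one k.
Proof.
move=> H; by rewrite -[g]wr_mul1g -(wr_mulVg g) -wr_mulA H.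
Qed.
Lemma wr_invU k (g h : wr2 k) : wr_mul g h = wr_one k -> h = wr_inv g.
Proof.
move=> H; by rewrite -[h]wr_mul1g -(wr_mulVg g) -wr_mulA H wr_mulg1.
Qed.

Lemma phi1 k phi : @ishom k phi -> phi (wr_one k) = wr_one k.
Proof. move=> hom; apply: wr_idem; by rewrite -hom wr_mul1g. Qed.
Lemma phiV k phi : @ishom k phi -> forall g, phi (wr_inv g) = wr_inv (phi g).
Proof. move=> hom g; apply: wr_invU; by rewrite -hom wr_mulgV phi1. Qed.

Lemma sq_one k (g : wr2 k) : (wr_mul g g = wr_one k) <-> g.2 = 0.
Proof.
case: g => A y; rewrite /wr_mul /=; split.
- case=> _ H; apply/rowP => i; have := congr1 (fun v : Zk k => v 0 i) H.
  rewrite !mxE -mulr2n => /eqP; by rewrite mulrn_eq0 /= => /eqP.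
- by move=> ->; rewrite shift0 symdiffvv addr0.
Qed.

Lemma phiB k phi : @ishom k phi -> forall A, (phi (A, 0)).2 = 0.
Proof.
move=> hom A; apply/sq_one; rewrite -hom.
by have /sq_one -> : (A, 0 : Zk k).2 = 0 by []; rewrite phi1.
Qed.

Definition mm k (phi : wr2 k -> wr2 k) (y : Zk k) := (phi (fset0, y)).2.

Lemma wr_decomp k (g : wr2 k) : g = wr_mul (g.1, 0) (fset0, g.2).
Proof. by case: g => A y; rewrite /wr_mul /= shift_set0 symdiff0 add0r. Qed.

Lemma phi2 k phi : @ishom k phi -> forall g, (phi g).2 = mm phi g.2.
Proof. move=> hom g; by rewrite {1}(wr_decomp g) hom /= phiB // add0r. Qed.

Lemma mmD k phi : @ishom k phi -> forall y y', mm phi (y + y') = mm phi y + mm phi y'.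
Proof.
move=> hom y y'; rewrite /mm.
have -> : (fset0, y + y') = wr_mul (fset0, y) (fset0, y').
  by rewrite /wr_mul /= shift_set0 symdiff0.
by rewrite hom.
Qed.

Lemma mm0 k phi : @ishom k phi -> mm phi 0 = 0.
Proof.
move=> hom; have H := mmD hom 0 0; rewrite addr0 in H.
by apply: (addrI (mm phi 0)); rewrite addr0 -H.
Qed.

Lemma mmN k phi : @ishom k phi -> forall y, mm phi (- y) = - mm phi y.
Proof.
move=> hom y; apply: (addrI (mm phi y)); by rewrite -mmD // !subrr mm0.
Qed.

Lemma mmMn k phi : @ishom k phi -> forall y n, mm phi (y *+ n) = mm phi y *+ n.
Proof.
move=> hom y; elim=> [|n IH]; first by rewrite !mulr0n mm0.
by rewrite !mulrS mmD // IH.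
Qed.

Lemma mmMz k phi : @ishom k phi -> forall y (c : int), mm phi (y *~ c) = mm phi y *~ c.
Proof.
move=> hom y [n|n]; first by rewrite /intmul mmMn.
by rewrite !NegzE !mulrNz mmN // /intmul mmMn.
Qed.

Definition MM k (phi : wr2 k -> wr2 k) : 'M[int]_k := \matrix_i mm phi (delta_mx 0 i).

Lemma mmE k phi : @ishom k phi -> forall y, mm phi y = y *m MM phi.
Proof.
move=> hom y; rewrite mulmx_sum_row {1}(row_sum_delta y).
elim/big_rec2: _ => [|i x1 x2 _ <-]; first exact: mm0.
rewrite mmD // rowK; congr (_ + _).
by rewrite -[y 0 i]intz !scaler_int mmMz.
Qed.

Definition phiBs k (phi : wr2 k -> wr2 k) (C : base k) := (phi (C, 0)).1.

Lemma phiBE k phi : @ishom k phi -> forall C, phi (C, 0) = (phiBs phi C, 0).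
Proof. move=> hom C; rewrite /phiBs; have := phiB hom C; by case: (phi (C, 0)) => a b /= ->. Qed.

Lemma phiBs_symdiff k phi : @ishom k phi -> forall C C',
  phiBs phi (symdiff C C') = symdiff (phiBs phi C) (phiBs phi C').
Proof.
move=> hom C C'; rewrite /phiBs; have -> : (symdiff C C', 0 : Zk k) = wr_mul (C, 0) (C', 0).
  by rewrite /wr_mul /= shift0 addr0.
by rewrite hom (phiBE hom C) (phiBE hom C') /wr_mul /= shift0.
Qed.

Lemma phiBs0 k phi : @ishom k phi -> phiBs phi fset0 = fset0.
Proof. move=> hom; by rewrite /phiBs -[(fset0, 0)]/(wr_one k) phi1. Qed.

Lemma shift_fset1 k (x y : Zk k) : shift x [fset y] = [fset x + y].
Proof. by apply/fsetP => v; rewrite in_shift !inE subr_eq addrC. Qed.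

Lemma phiBs1 k phi : @ishom k phi -> forall x,
  phiBs phi [fset x] = shift (mm phi x) (phiBs phi [fset 0]).
Proof.
move=> hom x; rewrite /phiBs.
have -> : ([fset x], 0 : Zk k) = wr_mul (wr_mul (fset0, x) ([fset 0], 0)) (wr_inv (fset0, x)).
  rewrite /wr_mul /wr_inv /= !shift_set0 sym0diff symdiff0 shift_fset1 !addr0 subrr.
  by [].
rewrite !hom phiV // (phiBE hom).
rewrite (surjective_pairing (phi (fset0, x))) /wr_mul /wr_inv /= -/(mm phi x).
rewrite shiftD addr0 subrr shift0.
by apply/fsetP => v; rewrite !in_symdiff; case: (v \in _); case: (v \in _).
Qed.

Lemma fsetU1_symdiff k (x : Zk k) (X : base k) : x \notin X -> x |` X = symdiff [fset x] X.
Proof.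
move=> xX; apply/fsetP => v; rewrite in_symdiff !inE.
by case: eqP => [->|]; rewrite ?(negbTE xX).
Qed.

Lemma card_filter_U1 (T : choiceType) (x : T) (X : {fset T}) (P : pred T) : x \notin X ->
  #|` [fset y in x |` X | P y]| = (P x + #|` [fset y in X | P y]|)%N.
Proof.
move=> xX; case Px: (P x).
- have -> : [fset y in x |` X | P y] = x |` [fset y in X | P y].
    apply/fsetP => v; rewrite !inE; case: eqP => [->|] //=; by rewrite Px.
  by rewrite cardfsU1 !inE (negbTE xX).
- have -> : [fset y in x |` X | P y] = [fset y in X | P y].
    apply/fsetP => v; rewrite !inE; case: eqP => [->|] //=; by rewrite Px (negbTE xX).
  by [].
Qed.

Lemma phiBs_mem k phi : @ishom k phi -> forall C v,
  (v \in phiBs phi C) = odd #|` [fset x in C | (v - mm phi x) \in phiBs phi [fset 0]]|.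
Proof.
move=> hom C v; elim/fset1U_rect: C => [|x X xX IH].
  rewrite phiBs0 // inE; have -> : [fset x in fset0 | (v - mm phi x) \in phiBs phi [fset 0]] = fset0.
    by apply/fsetP => y; rewrite !inE.
  by rewrite cardfs0.
rewrite card_filter_U1 // fsetU1_symdiff // phiBs_symdiff // in_symdiff IH phiBs1 // in_shift.
by rewrite oddD oddb.
Qed.

Fixpoint lexr k (r : seq 'I_k) (a b : Zk k) : bool :=
  match r with
  | [::] => true
  | i :: r' => (a 0 i < b 0 i) || ((a 0 i == b 0 i) && lexr r' a b)
  end.

Lemma lexr_refl k r (a : Zk k) : lexr r a a.
Proof. by elim: r => //= i r ->; rewrite eqxx orbT. Qed.

Lemma lexr_total k r (a b : Zk k) : lexr r a b || lexr r b a.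
Proof.
elim: r => //= i r IH.
case: (ltgtP (a 0 i) (b 0 i)) => //= ->; by rewrite eqxx.
Qed.

Lemma lexr_trans k r (a b c : Zk k) : lexr r a b -> lexr r b c -> lexr r a c.
Proof.
elim: r => //= i r IH.
case: (ltgtP (a 0 i) (b 0 i)) => //= [ab|->] /=.
- case: (ltgtP (b 0 i) (c 0 i)) => //= [bc|<-] _; first by rewrite (lt_trans ab bc).
  by rewrite ab.
- move=> H; case: (ltgtP (b 0 i) (c 0 i)) => //= _; exact: IH.
Qed.

Lemma lexr_anti k r (a b : Zk k) : lexr r a b -> lexr r b a -> forall i, i \in r -> a 0 i = b 0 i.
Proof.
elim: r => //= i r IH.
case: (ltgtP (a 0 i) (b 0 i)) => //= E H1 H2 j; rewrite inE => /orP [/eqP ->//|].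
exact: IH.
Qed.

Lemma lexr_add k r (a b c : Zk k) : lexr r a b -> lexr r (a + c) (b + c).
Proof.
elim: r => //= i r IH; rewrite !mxE ltrD2r (inj_eq (addIr _)).
by case: (_ < _) => //= /andP [-> /IH ->].
Qed.

Definition vle k (a b : Zk k) := lexr (enum 'I_k) a b.

Lemma vle_anti k (a b : Zk k) : vle a b -> vle b a -> a = b.
Proof.
move=> H1 H2; apply/rowP => i; exact: (lexr_anti H1 H2 (mem_enum _ i)).
Qed.

Lemma exists_max (T : eqType) (le : rel T) (tot : total le) (tr : transitive le)
  (s : seq T) x0 : x0 \in s -> exists2 m, m \in s & forall y, y \in s -> le y m.
Proof.
elim: s x0 => // a s IH x0 _; case: s IH => [|b s] IH.
  exists a; first exact: mem_head.
  move=> y; rewrite inE => /eqP ->; by have := tot a a; rewrite orbb.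
have [m ms mmax] := IH b (mem_head _ _).
case/orP: (tot a m) => h.
- exists m; first by rewrite inE ms orbT.
  move=> y; rewrite inE => /orP [/eqP ->//|]; exact: mmax.
- exists a; first exact: mem_head.
  move=> y; rewrite inE => /orP [/eqP ->|ys]; first by have := tot a a; rewrite orbb.
  exact: tr (mmax _ ys) h.
Qed.

Lemma extreme_sum k (le : rel (Zk k)) (tr : transitive le) (anti : antisymmetric le)
  (addc : forall a b c, le a b -> le (a + c) (b + c))
  (mf : Zk k -> Zk k) (minj : injective mf) (C Q : base k)
  (H : forall v, odd #|` [fset x in C | (v - mf x) \in Q]| = (v == 0))
  xM qM (hx : xM \in C) (hq : qM \in Q)
  (hP : forall x, x \in C -> le (mf x) (mf xM)) (hQ : forall q, q \in Q -> le q qM) :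
  mf xM + qM = 0.
Proof.
have E : [fset x in C | (mf xM + qM - mf x) \in Q] = [fset xM].
  apply/fsetP => x; rewrite !inE; apply/andP/eqP => [[xC hq']| ->]; last first.
    by rewrite hx addrC addKr.
  set q := mf xM + qM - mf x in hq'.
  have e1 : mf x + q = mf xM + qM by rewrite /q addrC subrK.
  have l1 : le (mf x + q) (mf x + qM).
    by rewrite ![mf x + _]addrC; apply: addc; apply: hQ.
  have l2 : le (mf x + qM) (mf xM + qM) by apply: addc; apply: hP.
  have e2 : mf x + qM = mf xM + qM.
    by apply: anti; rewrite l2 -e1 l1.
  by apply: minj; apply: (addIr qM).
have := H (mf xM + qM); rewrite E cardfs1 /= => /esym/eqP; done.
Qed.

Lemma vle_total k : total (@vle k).
Proof. move=> a b; exact: lexr_total. Qed.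
Lemma vle_trans k : transitive (@vle k).
Proof. move=> b a c; exact: lexr_trans. Qed.
Lemma vle_antis k : antisymmetric (@vle k).
Proof. move=> a b /andP [h1 h2]; exact: vle_anti. Qed.
Lemma vle_add k (a b c : Zk k) : vle a b -> vle (a + c) (b + c).
Proof. exact: lexr_add. Qed.

Lemma unit_singleton k (mf : Zk k -> Zk k) (minj : injective mf) (C Q : base k)
  (H : forall v, odd #|` [fset x in C | (v - mf x) \in Q]| = (v == 0)) :
  exists z, Q = [fset z].
Proof.
have : [fset x in C | (0 - mf x) \in Q] != fset0.
  apply/negP => /eqP E; have := H 0; by rewrite E cardfs0 eqxx.
case/fset0Pn => x0; rewrite !inE => /andP [x0C q0Q].
have [qM qMQ hQM] := exists_max (@vle_total k) (@vle_trans k) q0Q.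
have [qm qmQ hQm] := exists_max (le := fun a b => vle b a)
  (fun a b => vle_total b a) (fun b a c h1 h2 => vle_trans h2 h1) q0Q.
have [xM xMC hPM] := exists_max (le := fun a b => vle (mf a) (mf b))
  (fun a b => vle_total (mf a) (mf b)) (fun b a c h1 h2 => vle_trans h1 h2) x0C.
have [xm xmC hPm] := exists_max (le := fun a b => vle (mf b) (mf a))
  (fun a b => vle_total (mf b) (mf a)) (fun b a c h1 h2 => vle_trans h2 h1) x0C.
have eM := extreme_sum (@vle_trans k) (@vle_antis k) (@vle_add k) minj H xMC qMQ hPM hQM.
have em := extreme_sum (le := fun a b => vle b a) (fun b a c h1 h2 => vle_trans h2 h1)
  (fun a b h => esym (@vle_antis k b a h))
  (fun a b c h => vle_add c h) minj H xmC qmQ hPm hQm.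
have eq : qm = qM.
  have l1 : vle (mf xm + qm) (mf xm + qM).
    by rewrite ![mf xm + _]addrC; apply: vle_add; apply: hQM.
  have l2 : vle (mf xm + qM) (mf xM + qM) by apply: vle_add; apply: hPM.
  apply: (addrI (mf xm)); apply: vle_antis; rewrite l1 /=.
  by rewrite em -eM.
exists qM; apply/fsetP => q; rewrite inE; apply/idP/eqP => [qQ|->//].
apply: vle_antis; rewrite hQM //=; rewrite -eq; exact: hQm.
Qed.

Lemma wr_invK k (g : wr2 k) : wr_inv (wr_inv g) = g.
Proof. by apply/esym/wr_invU; rewrite wr_mulVg. Qed.

Lemma wr_invM k (g h : wr2 k) : wr_inv (wr_mul g h) = wr_mul (wr_inv h) (wr_inv g).
Proof.
apply/esym/wr_invU; rewrite wr_mulA -(wr_mulA g h) wr_mulgV wr_mulg1 wr_mulgV //.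
Qed.


Lemma rel_common k phi : @ishom k phi -> forall r g1 g2,
  reidemeister_rel phi r g1 -> reidemeister_rel phi r g2 ->
  reidemeister_rel phi g1 g2.
Proof.
move=> hom r g1 g2 [h ->] [h' ->].
exists (wr_mul h' (wr_inv h)).
rewrite wr_invM wr_invK hom (phiV hom h').
set a := phi h; set b := wr_inv (phi h').
rewrite (phiV hom h) -/a.
rewrite -!wr_mulA (wr_mulA (wr_inv h) h) wr_mulVg wr_mul1g.
by rewrite (wr_mulA (wr_inv a) a) wr_mulVg wr_mul1g.
Qed.

Lemma family_infinite k phi (F : nat -> wr2 k) :
  (forall a b, a <> b -> forall r, reidemeister_rel phi r (F a) -> reidemeister_rel phi r (F b) -> False) ->
  reidemeister_infinite phi.
Proof.
move=> Hf [s Hs].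
have rhoP : forall g, {x | x \in s /\ reidemeister_rel phi x g}.
  move=> g; apply: constructive_indefinite_description.
  by have [x xs xr] := Hs g; exists x.
pose rho g := proj1_sig (rhoP g).
have inj : injective (fun a => rho (F a)).
  move=> a b E; apply/eqP/negP => /negP/eqP ab.
  have [_ ra] := proj2_sig (rhoP (F a)); have [_ rb] := proj2_sig (rhoP (F b)).
  apply: (Hf a b ab (rho (F b))) => //.
  by move: E ra => /= <-.
have U : uniq [seq rho (F a) | a <- iota 0 (size s).+1].
  by rewrite map_inj_uniq // iota_uniq.
have S : {subset [seq rho (F a) | a <- iota 0 (size s).+1] <= s}.
  by move=> x /mapP [a _ ->]; have [] := proj2_sig (rhoP (F a)).
by have := uniq_leq_size U S; rewrite size_map size_iota ltnn.
Qed.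

Lemma rel_snd k phi : @ishom k phi -> forall h g,
  (wr_mul (wr_mul h g) (phi (wr_inv h))).2 = g.2 + h.2 *m (1%:M - MM phi).
Proof.
move=> hom h g; rewrite /wr_mul /= phi2 // mmE // /wr_inv /=.
by rewrite mulmxBr mulmx1 mulNmx addrA (addrC h.2).
Qed.

Lemma mm_inj k phi : wr_automorphism phi -> injective (@mm k phi).
Proof.
case=> [[psi K1 K2] hom] a b E.
have E0 : mm phi (a - b) = 0 by rewrite mmD // mmN // E subrr.
have : (phi (fset0, a - b)).2 = 0 by [].
move/sq_one; rewrite -hom -(phi1 hom) => /(can_inj K1)/sq_one /= /eqP.
by rewrite subr_eq0 => /eqP.
Qed.

Lemma mm_surj k phi : wr_automorphism phi -> forall y, exists x, @mm k phi x = y.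
Proof.
case=> [[psi K1 K2] hom] y; exists (psi (fset0, y)).2.
by rewrite -phi2 // K2.
Qed.

Lemma case_det0 k (phi : wr2 k -> wr2 k) : wr_automorphism phi -> \det (1%:M - MM phi) = 0 ->
  reidemeister_infinite phi.
Proof.
move=> aut dA; have hom := aut.2.
set A := 1%:M - MM phi in dA *.
pose AQ := map_mx (intr : int -> rat) A.
have : \det (AQ^T) == 0 by rewrite det_tr det_map_mx dA rmorph0.
case/det0P => v vnz vA.
have [j vj] : exists j, v 0 j != 0.
  apply/existsP; apply: contraR vnz => /existsPn H; apply/eqP/rowP => i.
  by have := H i; rewrite negbK mxE => /eqP.
pose l (y : Zk k) : rat := (map_mx intr y *m v^T) 0 0.
have lA : forall y, l (y *m A) = 0.
  move=> y; rewrite /l map_mxM -mulmxA -/AQ.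
  by rewrite -[AQ]trmxK -trmx_mul vA trmx0 mulmx0 mxE.
have lD : forall a b, l (a + b) = l a + l b.
  by move=> a b; rewrite /l map_mxD mulmxDl mxE.
have lF : forall n : nat, l ((n%:Z) *: delta_mx 0 j) = n%:R * v 0 j.
  move=> n; rewrite /l map_mxZ map_delta_mx -scalemxAl -rowE !mxE.
  by congr (_ * _).
apply: (family_infinite (F := fun n : nat => (fset0, (n%:Z) *: delta_mx 0 j : Zk k))).
move=> a b ab r ra rb.
have inv : forall g, reidemeister_rel phi r g -> l g.2 = l r.2.
  by move=> g [h ->]; rewrite rel_snd // lD lA addr0.
have := inv _ ra; have := inv _ rb; rewrite [(_, _).2]/= [(_, _).2]/= !lF => <-.
move/(mulIf vj)/eqP; rewrite eqr_nat => /eqP; exact: ab.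

Qed.

Lemma Ainj k (A : 'M[int]_k) : \det A != 0 -> forall y : Zk k, y *m A = 0 -> y = 0.
Proof.
move=> dA y yA; have := congr1 (fun w => w *m \adj A) yA.
rewrite mul0mx -mulmxA mul_mx_adj mul_mx_scalar => /rowP H.
apply/rowP => i; have := H i; rewrite !mxE => /eqP; rewrite mulf_eq0 (negbTE dA) /=.
by move/eqP.
Qed.

Lemma Q_singleton k (phi : wr2 k -> wr2 k) : wr_automorphism phi ->
  exists z, phiBs phi [fset 0] = [fset z].
Proof.
move=> aut; have hom := aut.2; case: (aut.1) => psi K1 K2.
set g := psi ([fset 0], 0).
have Eg : phi g = ([fset 0], 0) by rewrite K2.
have g2 : g.2 = 0.
  apply: (mm_inj aut); rewrite mm0 // -phi2 // Eg //.
have EC : phiBs phi g.1 = [fset 0].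
  rewrite /phiBs; have -> : (g.1, 0 : Zk k) = g by rewrite -g2; case: (g).
  by rewrite Eg.
apply: (unit_singleton (mm_inj aut) (C := g.1)) => v.
by rewrite -phiBs_mem // EC inE.
Qed.

Lemma phiBs_img k (phi : wr2 k -> wr2 k) (aut : wr_automorphism phi) z :
  phiBs phi [fset 0] = [fset z] ->
  forall C, phiBs phi C = [fset mm phi x + z | x in C].
Proof.
move=> Hz C; have hom := aut.2; apply/fsetP => v; rewrite phiBs_mem // Hz.
case: (boolP (v \in [fset mm phi x + z | x in C])) => [/imfsetP [x xC ->]|nin].
- have -> : [fset y in C | (mm phi x + z - mm phi y) \in [fset z]] = [fset x].
    apply/fsetP => y; rewrite !inE; apply/andP/eqP => [[yC E]|->].
      move/eqP: E => E.
      have : mm phi x - mm phi y = 0.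
        by apply: (addIr z); rewrite add0r -{2}E addrAC.
      by move/eqP; rewrite subr_eq0 => /eqP /(mm_inj aut).
    by split; [exact: xC | rewrite addrAC subrr add0r].
  by rewrite cardfs1.
- have -> : [fset y in C | (v - mm phi y) \in [fset z]] = fset0.
    apply/fsetP => y; rewrite !inE; apply/negP => /andP [yC /eqP E].
    move/negP: nin; apply; apply/imfsetP; exists y => //.
    by rewrite -E addrC subrK.
  by rewrite cardfs0.
Qed.

Definition uu k (phi : wr2 k -> wr2 k) z (x : Zk k) := x *m (1%:M - MM phi) - z.

Lemma uu_f k (phi : wr2 k -> wr2 k) : ishom phi -> forall z x,
  uu phi z (mm phi x + z) = uu phi z x *m MM phi.
Proof.
move=> hom z x; rewrite /uu mmE //; set M := MM phi.
rewrite mulmxDl !mulmxBr !mulmx1 mulmxDl mulmxBl mulNmx.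
by rewrite (addrAC (x *m M)) addrK opprD addrA.
Qed.

Definition divb k (N : int) (w : Zk k) := [forall i, w 0 i \in dvdz N].

Lemma divbP k N (w : Zk k) : reflect (exists c : Zk k, w = N *: c) (divb N w).
Proof.
apply: (iffP forallP) => [H|[c ->] i]; last by rewrite mxE dvdz_mulr // dvdzz.
exists (\row_i divz (w 0 i) N); apply/rowP => i; rewrite !mxE.
by rewrite mulrC divzK.
Qed.

Lemma divbM k (phi : wr2 k -> wr2 k) : wr_automorphism phi -> forall N w,
  divb N (w *m MM phi) = divb N w.
Proof.
move=> aut N w; have hom := aut.2; apply/divbP/divbP => [[c Ec]|[c ->]]; last first.
  by exists (c *m MM phi); rewrite scalemxAl.
have [c' Ec'] := mm_surj aut c.
exists c'; apply: (mm_inj aut); rewrite !mmE // Ec -Ec' mmE //.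
by rewrite scalemxAl.
Qed.

Lemma odd_card_sym1 k (x : Zk k) (Z : base k) :
  odd #|` symdiff [fset x] Z| = ~~ odd #|` Z|.
Proof.
case: (boolP (x \in Z)) => xZ.
- have -> : symdiff [fset x] Z = Z `\ x.
    apply/fsetP => v; rewrite in_symdiff !inE; case: eqP => [->|] /=; by rewrite ?xZ.
  by rewrite (cardfsD1 x Z) xZ /= negbK.
- rewrite -fsetU1_symdiff // cardfsU1 xZ /=; done.
Qed.

Lemma odd_card_symdiff k (X Y : base k) :
  odd #|` symdiff X Y| = odd #|` X| (+) odd #|` Y|.
Proof.
elim/fset1U_rect: X => [|x X xX IH]; first by rewrite sym0diff cardfs0.
rewrite fsetU1_symdiff // -symdiffA !odd_card_sym1 IH.
by case: (odd _); case: (odd _).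
Qed.

Definition lam k (phi : wr2 k -> wr2 k) z N (b : base k) :=
  odd #|` [fset x in b | divb N (uu phi z x)]|.

Lemma lam_symdiff k (phi : wr2 k -> wr2 k) z N X Y :
  lam phi z N (symdiff X Y) = lam phi z N X (+) lam phi z N Y.
Proof.
rewrite /lam -odd_card_symdiff; congr (odd #|` _|).
apply/fsetP => v; rewrite !(inE, in_symdiff).
by case: (v \in X); case: (v \in Y); case: divb.
Qed.

Lemma lam_img k (phi : wr2 k -> wr2 k) (aut : wr_automorphism phi) z N C :
  lam phi z N [fset mm phi x + z | x in C] = lam phi z N C.
Proof.
have hom := aut.2; rewrite /lam.
have inj : injective (fun x => mm phi x + z).
  by move=> a b /addIr; apply: mm_inj.
have -> : [fset y in [fset mm phi x + z | x in C] | divb N (uu phi z y)] =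
          [fset mm phi x + z | x in [fset x in C | divb N (uu phi z x)]].
  apply/fsetP => v; rewrite !inE; apply/andP/imfsetP => [[/imfsetP [x xC ->] dv]|[x]].
    by exists x => //; rewrite !inE xC -(divbM aut) -uu_f.
  rewrite !inE => /andP [xC dx] ->; split; first by apply/imfsetP; exists x.
  by rewrite uu_f // divbM.
rewrite card_imfset //=.
Qed.

Lemma lam_class k (phi : wr2 k -> wr2 k) (aut : wr_automorphism phi) z :
  \det (1%:M - MM phi) != 0 -> phiBs phi [fset 0] = [fset z] ->
  forall N b b', reidemeister_rel phi (b, 0) (b', 0) -> lam phi z N b' = lam phi z N b.
Proof.
move=> dA Hz N b b' [h E]; have hom := aut.2.
have h2 : h.2 = 0.
  apply: (Ainj dA); have := congr1 snd E; rewrite rel_snd //= add0r => <-.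
  by [].
case: h h2 E => C w /= ->.
have -> : wr_inv (C, 0 : Zk k) = (C, 0) by rewrite /wr_inv /= oppr0 shift0.
rewrite phiBE // /wr_mul /= => [[-> _]].
rewrite shift0 addr0 shift0 (phiBs_img aut Hz) !lam_symdiff lam_img //.
by case: (lam _ _ _ C); case: (lam _ _ _ b).
Qed.

Lemma num_bound (ta tb W D : nat) (d e : int) : absz d = D -> (e == 0) || (e == 1) ->
  (1 <= W)%N -> (1 <= D)%N -> (1 <= ta)%N -> (4*W*D*ta <= tb)%N ->
  (absz (tb%:Z * d - e)%R > absz (ta%:Z * d - e)%R * W)%N.
Proof.
move=> hD /orP [] /eqP -> hW hD1 hta htb.
- have : (0 <= d) \/ (d < 0) by lia.
  case=> hd; nia.
- have : (0 <= d) \/ (d < 0) by lia.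
  case=> hd; nia.
Qed.

Lemma num_pos (ta D : nat) (d e : int) : absz d = D -> (e == 0) || (e == 1) ->
  (1 <= D)%N -> (2 <= ta)%N -> (0 < absz (ta%:Z * d - e)%R)%N.
Proof.
move=> hD /orP [] /eqP -> hD1 hta.
- have : (0 <= d) \/ (d < 0) by lia.
  case=> hd; nia.
- have : (0 <= d) \/ (d < 0) by lia.
  case=> hd; nia.
Qed.

Lemma lam1 k (phi : wr2 k -> wr2 k) z N (y : Zk k) :
  lam phi z N [fset y] = divb N (uu phi z y).
Proof.
rewrite /lam; case Py: (divb N (uu phi z y)).
- have -> : [fset x in [fset y] | divb N (uu phi z x)] = [fset y].
    by apply/fsetP => v; rewrite !inE; case: eqP => [->|] //=; rewrite Py.
  by rewrite cardfs1.
- have -> : [fset x in [fset y] | divb N (uu phi z x)] = fset0.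
    by apply/fsetP => v; rewrite !inE; case: eqP => [->|] //=; rewrite Py.
  by rewrite cardfs0.
Qed.

Lemma case_detn0 k (hk : (1 <= k)%N) (phi : wr2 k -> wr2 k) : wr_automorphism phi ->
  \det (1%:M - MM phi) != 0 -> reidemeister_infinite phi.
Proof.
move=> aut dA; have hom := aut.2.
have [z Hz] := Q_singleton aut.
set A := 1%:M - MM phi in dA *; set d := \det A in dA *.
pose i0 : 'I_k := Ordinal hk.
pose w : Zk k := if z == 0 then delta_mx 0 i0 else z.
pose eps : int := if z == 0 then 0 else 1.
have epsb : (eps == 0) || (eps == 1) by rewrite /eps; case: (z == 0).
have zw : z = eps *: w.
  by rewrite /eps /w; case: eqP => [->|]; rewrite ?scale0r ?scale1r.
have [j wj] : exists j, w 0 j != 0.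
  rewrite /w; case: eqP => [_|/eqP zn0].
    by exists i0; rewrite mxE !eqxx.
  apply/existsP; apply: contraR zn0 => /existsPn H; apply/eqP/rowP => i.
  by have := H i; rewrite negbK mxE => /eqP.
pose W := absz (w 0 j); pose D := absz d.
have W1 : (1 <= W)%N by rewrite absz_gt0.
have D1 : (1 <= D)%N by rewrite absz_gt0.
pose K := (4 * W * D)%N.
have K4 : (4 <= K)%N by rewrite /K; nia.
pose T t := (K ^ t.+1)%N.
have TK : forall t, (K <= T t)%N.
  move=> t; rewrite /T expnS -{1}(muln1 K) leq_mul2l expn_gt0; lia.
have Tab : forall a b, (a < b)%N -> (K * T a <= T b)%N.
  move=> a b ab; rewrite /T.
  have -> : b.+1 = ((b - a).-1 + a.+1).+1 by lia.
  rewrite [X in (_ <= X)%N]expnS expnD leq_mul2l leq_pmull ?orbT //.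
  by rewrite expn_gt0; lia.
pose x t : Zk k := ((T t)%:Z) *: (w *m \adj A).
pose N t : int := (T t)%:Z * d - eps.
have ux : forall t, uu phi z (x t) = N t *: w.
  move=> t; rewrite /uu /x -scalemxAl -mulmxA -/A mul_adj_mx mul_mx_scalar scalerA zw.
  by rewrite -scalerBl.
have key : forall a b, (a < b)%N -> divb (N b) (N a *: w) = false.
  move=> a b ab; apply/negP => /forallP /(_ j); rewrite mxE dvdzE abszM -/W.
  have Ta2 : (2 <= T a)%N by have := TK a; lia.
  have Na : (0 < absz (N a))%N by apply: (num_pos (D := D)).
  have pos : (0 < absz (N a) * W)%N by nia.
  move/dvdn_leq => /(_ pos); apply/negP; rewrite -ltnNge.
  apply: (num_bound (D := D)) => //; first by have := TK a; lia.
  by have := Tab a b ab; rewrite /K.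
have self : forall b, divb (N b) (N b *: w) by move=> b; apply/divbP; exists w.
apply: (family_infinite (F := fun t => ([fset x t], 0))).
move=> a b ab r ra rb.
have hab : forall M, divb M (uu phi z (x b)) = divb M (uu phi z (x a)).
  move=> M; rewrite -!lam1; apply: (lam_class aut dA Hz).
  exact: (rel_common hom ra rb).
case: (ltngtP a b) => [lt|lt|eq] //.
- by have := hab (N b); rewrite !ux self key.
- by have := hab (N a); rewrite !ux self key.
Qed.

Theorem theorem2p3 (k : nat) (hk : (1 <= k)%N) :
  forall phi : wr2 k -> wr2 k, wr_automorphism phi -> reidemeister_infinite phi.
Proof.
move=> phi aut.
case: (boolP (\det (1%:M - MM phi) == 0)) => [/eqP H|H].
- exact: case_det0.
- exact: case_detn0.
Qed.
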